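(* Let $L_5=\{-3,-2,-1,0,1\}$ with its natural linear order. Define the games $\star=\{-1\mid -3\}$, and for any game $G$: $\mathsf{M}(G)=\{1\mid G\}$, $\mathsf{P}(G)=\{G\mid -2\}$, $\mathsf{P}_\star(G)=\{G\mid \star\}$. For $n\in\mathbb{N}$ let $\mathsf{P}_n(G)=\mathsf{P}(G)$ if $n$ is odd and $\mathsf{P}_n(G)=\mathsf{P}_\star(G)$ if $n$ is even. Define $G_0=0$ (the atomic game $[0]$) and $G_{n+1}=\mathsf{M}(\mathsf{P}_n(G_n))$. Then for every $n\ge 0$, $G_{n+1}\not\le G_n$.
   Context: Games over a poset $A$ of atoms are defined inductively: for each $a\in A$, $[a]$ is a game (atomic; often written simply $a$); whenever $L,R$ are non-empty sets of games, $\{L\mid R\}$ is a game (composite), with left options the elements of $L$ and right options the elements of $R$; $\{G_1,\dots,G_n\mid H_1,\dots,H_m\}$ denotes $\{\{G_1,\dots,G_n\}\mid\{H_1,\dots,H_m\}\}$. Relations $\le$ and $\lhd$ on games are defined by mutual recursion: $G\le H$ iff (1) every left option $G^L$ of $G$ satisfies $G^L\lhd H$, (2) every right option $H^R$ of $H$ satisfies $G\lhd H^R$, and (3) if $G$ or $H$ is atomic then $G\lhd H$. $G\lhd H$ iff (1) some right option $G^R$ of $G$ satisfies $G^R\le H$, or (2) some left option $H^L$ of $H$ satisfies $G\le H^L$, or (3) $G=[a]$, $H=[b]$ are atomic with $a\le b$ in $A$. *)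

(* Defs.v *)
From Stdlib Require Import List Arith.
Import ListNotations.
Set Implicit Arguments.

Inductive game (A : Type) : Type :=
| Atom (a : A)
| Comp (L R : list (game A)).
Arguments Atom {A} a.
Arguments Comp {A} L R.

Definition lefts {A} (G : game A) : list (game A) :=
  match G with Atom _ => [] | Comp L _ => L end.
Definition rights {A} (G : game A) : list (game A) :=
  match G with Atom _ => [] | Comp _ R => R end.
Definition is_atom {A} (G : game A) : Prop :=
  match G with Atom _ => True | Comp _ _ => False end.

(* G <= H  and  G <| H, defined by mutual recursion (as inductive predicates;
   since games are well-founded this is the unique solution of the recursion). *)
Inductive gle {A} (leA : A -> A -> Prop) : game A -> game A -> Prop :=
| gle_intro G H :
    (forall GL, In GL (lefts G) -> glf leA GL H) ->
    (forall HR, In HR (rights H) -> glf leA G HR) ->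
    ((is_atom G \/ is_atom H) -> glf leA G H) ->
    gle leA G H
with glf {A} (leA : A -> A -> Prop) : game A -> game A -> Prop :=
| glf_right G H GR : In GR (rights G) -> gle leA GR H -> glf leA G H
| glf_left G H HL : In HL (lefts H) -> gle leA G HL -> glf leA G H
| glf_atom a b : leA a b -> glf leA (Atom a) (Atom b).

Inductive L5 : Type := m3 | m2 | m1 | z0 | p1.
Definition L5_rank (x : L5) : nat :=
  match x with m3 => 0 | m2 => 1 | m1 => 2 | z0 => 3 | p1 => 4 end.
Definition L5_le (x y : L5) : Prop := L5_rank x <= L5_rank y.

Definition G5 := game L5.
Definition star : G5 := Comp [Atom m1] [Atom m3].
Definition Mg (G : G5) : G5 := Comp [Atom p1] [G].
Definition Pg (G : G5) : G5 := Comp [G] [Atom m2].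
Definition Pstar (G : G5) : G5 := Comp [G] [star].
Definition Pn (n : nat) (G : G5) : G5 := if Nat.odd n then Pg G else Pstar G.
Fixpoint Gn (n : nat) : G5 :=
  match n with
  | 0 => Atom z0
  | S k => Mg (Pn k (Gn k))
  end.

(* Main.v *)
Require Import Defs.
From Stdlib Require Import List Arith Lia.
Import ListNotations.

Section S.
Notation le := (gle L5_le).
Notation lf := (glf L5_le).

Lemma gle_L {G H} : le G H -> forall GL, In GL (lefts G) -> lf GL H.
Proof. intros h; destruct h; auto. Qed.
Lemma gle_R {G H} : le G H -> forall HR, In HR (rights H) -> lf G HR.
Proof. intros h; destruct h; auto. Qed.
Lemma gle_A G H : le G H -> (is_atom G \/ is_atom H) -> lf G H.
Proof. intros h; destruct h; auto. Qed.
Lemma glf_inv G H : lf G H ->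
  (exists GR, In GR (rights G) /\ le GR H) \/ (exists HL, In HL (lefts H) /\ le G HL)
  \/ (exists a b, G = Atom a /\ H = Atom b /\ L5_le a b).
Proof. intros h; destruct h; eauto 10. Qed.

Definition r (k : nat) : G5 := if Nat.odd k then Atom m2 else star.
Lemma Pn_l k G : lefts (Pn k G) = [G].
Proof. unfold Pn; destruct (Nat.odd k); reflexivity. Qed.
Lemma Pn_r k G : rights (Pn k G) = [r k].
Proof. unfold Pn, r; destruct (Nat.odd k); reflexivity. Qed.
Lemma Pn_na k G : Pn k G = Atom z0 -> False.
Proof. unfold Pn; destruct (Nat.odd k); discriminate. Qed.

Lemma lf_single_r G x H : rights G = [x] -> lefts H = [] -> lf G H -> le x H \/ (exists a b, G = Atom a /\ H = Atom b /\ L5_le a b).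
Proof.
  intros e1 e2 h. apply glf_inv in h as [[GR [i h]]|[[HL [i h]]|h]]; auto.
  - rewrite e1 in i; destruct i as [<-|[]]; auto.
  - rewrite e2 in i; destruct i.
Qed.

Lemma G_not_m1 n : ~ lf (Gn n) (Atom m1).
Proof.
  induction n as [|n IH]; intro h.
  - apply glf_inv in h as [[GR [i h]]|[[HL [i h]]|[a [b [e1 [e2 h]]]]]];
      try (simpl in i; contradiction).
    inversion e1; inversion e2; subst. unfold L5_le in h; simpl in h; lia.
  - apply lf_single_r with (x := Pn n (Gn n)) in h; try reflexivity.
    destruct h as [h|[a [b [e _]]]]; [|discriminate].
    apply IH. apply (gle_L h). rewrite Pn_l; left; reflexivity.
Qed.

Lemma r_ne k : ~ le (r (S k)) (r k).
Proof.
  unfold r. rewrite Nat.odd_succ, <- Nat.negb_odd.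
  destruct (Nat.odd k); simpl; intro h.
  -
    assert (h' := gle_L h (Atom m1) ltac:(left; reflexivity)); clear h; rename h' into h.
    apply glf_inv in h as [[GR [i _]]|[[HL [i _]]|[a [b [e1 [e2 h]]]]]];
      try (simpl in i; contradiction).
    inversion e1; inversion e2; subst. unfold L5_le in h; simpl in h; lia.
  - assert (h' := gle_R h (Atom m3) ltac:(left; reflexivity)); clear h; rename h' into h.
    apply glf_inv in h as [[GR [i _]]|[[HL [i _]]|[a [b [e1 [e2 h]]]]]];
      try (simpl in i; contradiction).
    inversion e1; inversion e2; subst. unfold L5_le in h; simpl in h; lia.
Qed.

Lemma Q_succ k : ~ le (Pn (S k) (Gn (S k))) (Pn k (Gn k)).
Proof.
  intro h. assert (h' := gle_R h (r k) ltac:(rewrite Pn_r; left; reflexivity)); clear h; rename h' into h.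
  apply glf_inv in h as [[GR [i h]]|[[HL [i h]]|[a [b [e1 _]]]]].
  - rewrite Pn_r in i; destruct i as [<-|[]]. exact (r_ne k h).
  - unfold r in i. destruct (Nat.odd k); simpl in i; [contradiction|].
    destruct i as [<-|[]].
    apply (G_not_m1 (S k)). apply (gle_L h). rewrite Pn_l; left; reflexivity.
  - unfold Pn in e1; destruct (Nat.odd (S k)); discriminate.
Qed.

Lemma main k : forall m, k < m -> ~ le (Gn m) (Gn k) /\ ~ le (Pn m (Gn m)) (Pn k (Gn k)).
Proof.
  induction k as [|k IHk]; intros m hm.
  - assert (HG : forall m, 0 < m -> ~ le (Gn m) (Gn 0)).
    { intros [|m'] hm' h; [lia|].
      assert (h' := gle_L h (Atom p1) ltac:(left; reflexivity)); clear h; rename h' into h.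
      apply glf_inv in h as [[GR [i _]]|[[HL [i _]]|[a [b [e1 [e2 h]]]]]];
        try (simpl in i; contradiction).
      inversion e1; inversion e2; subst. unfold L5_le in h; simpl in h; lia. }
    split; [now apply HG|].
    induction m as [|m IHm]; [lia|].
    destruct (Nat.eq_dec m 0) as [->|nz]; [apply Q_succ|].
    intro h. assert (h' := gle_L h (Gn (S m)) ltac:(rewrite Pn_l; left; reflexivity)); clear h; rename h' into h.
    apply glf_inv in h as [[GR [i h]]|[[HL [i h]]|[a [b [e1 _]]]]].
    + simpl in i; destruct i as [<-|[]]. apply IHm; [lia|exact h].
    + rewrite Pn_l in i; destruct i as [<-|[]]. exact (HG (S m) hm h).
    + discriminate.
  - assert (HG : forall m, S k < m -> ~ le (Gn m) (Gn (S k))).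
    { intros [|m'] hm' h; [lia|].
      assert (h' := gle_R h (Pn k (Gn k)) ltac:(left; reflexivity)); clear h; rename h' into h.
      apply glf_inv in h as [[GR [i h]]|[[HL [i h]]|[a [b [e1 _]]]]].
      + simpl in i; destruct i as [<-|[]]. apply (proj2 (IHk m' ltac:(lia))); exact h.
      + rewrite Pn_l in i; destruct i as [<-|[]]. apply (proj1 (IHk (S m') ltac:(lia))); exact h.
      + discriminate. }
    split; [now apply HG|].
    induction m as [|m IHm]; [lia|].
    destruct (Nat.eq_dec m (S k)) as [->|nz]; [apply Q_succ|].
    intro h. assert (h' := gle_L h (Gn (S m)) ltac:(rewrite Pn_l; left; reflexivity)); clear h; rename h' into h.
    apply glf_inv in h as [[GR [i h]]|[[HL [i h]]|[a [b [e1 _]]]]].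
    + simpl in i; destruct i as [<-|[]]. apply IHm; [lia|exact h].
    + rewrite Pn_l in i; destruct i as [<-|[]]. exact (HG (S m) hm h).
    + discriminate.
Qed.
End S.

Theorem lemma3p4 : forall n : nat, ~ gle L5_le (Gn (S n)) (Gn n).
Proof.
  intro n. exact (proj1 (main n (S n) (Nat.lt_succ_diag_r n))).
Qed.
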